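(* Let $\mathcal{X}$ be a skeletally small additive category and let $d_{\mathrm{III}}:\overline{\mathrm{III}}(\mathcal{X})\to\overline{\mathrm{III}}(\mathcal{X}^{op})$ be the contravariant functor obtained by reversing all arrows, i.e. sending $X_1\xrightarrow{f_1}X_2\xrightarrow{f_2}X_3$ to the diagram $X_3\xrightarrow{f_2}X_2\xrightarrow{f_1}X_1$ in $\mathcal{X}^{op}$ and a morphism $(\alpha_1,\alpha_2,\alpha_3)$ to $(\alpha_3,\alpha_2,\alpha_1)$ regarded in $\mathcal{X}^{op}$. Then $d_{\mathrm{III}}$ is, up to natural isomorphism, the unique exact contravariant functor $\overline{\mathrm{III}}(\mathcal{X})\to\overline{\mathrm{III}}(\mathcal{X}^{op})$ with $d_{\mathrm{III}}\circ\mathfrak{j}\cong\mathfrak{j}^{op}\circ\mathfrak{d}$.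
   Context: $\overline{\mathrm{III}}(\mathcal{X})$ (Adelman's category) has objects diagrams $X_1\xrightarrow{f_1}X_2\xrightarrow{f_2}X_3$ in $\mathcal{X}$ (not necessarily complexes) and morphisms to $Y_1\xrightarrow{g_1}Y_2\xrightarrow{g_2}Y_3$ the commuting triples $(\alpha_1,\alpha_2,\alpha_3)$ modulo those with $\alpha_2=g_1s+tf_2$ for some $s:X_2\to Y_1$, $t:X_3\to Y_2$; it is abelian. $\mathfrak{j}:\mathcal{X}\to\overline{\mathrm{III}}(\mathcal{X})$, $X\mapsto(0\to X\to0)$, and $\mathfrak{j}^{op}:\mathcal{X}^{op}\to\overline{\mathrm{III}}(\mathcal{X}^{op})$ is the analogous functor for $\mathcal{X}^{op}$. $\mathfrak{d}:\mathcal{X}\to\mathcal{X}^{op}$ is the canonical contravariant identity (duality). *)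

(* Defs.v *)
Record RawAdd := MkRaw {
  Ob : Type;
  Hom : Ob -> Ob -> Type;
  heq : forall a b : Ob, Hom a b -> Hom a b -> Prop;
  idm : forall a : Ob, Hom a a;
  comp : forall a b c : Ob, Hom b c -> Hom a b -> Hom a c;
  hzero : forall a b : Ob, Hom a b;
  hadd : forall a b : Ob, Hom a b -> Hom a b -> Hom a b }.

Arguments Hom {r} _ _.
Arguments heq {r a b} _ _.
Arguments idm {r} a.
Arguments comp {r a b c} _ _.
Arguments hzero {r} a b.
Arguments hadd {r a b} _ _.

Definition opR (C : RawAdd) : RawAdd :=
  MkRaw (Ob C) (fun a b => @Hom C b a) (fun a b u v => @heq C b a u v)
    (@idm C) (fun a b c g f => @comp C c b a f g) (fun a b => @hzero C b a)
    (fun a b u v => @hadd C b a u v).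

Record AddCat := MkAdd {
  AC :> RawAdd;
  hopp : forall a b : Ob AC, @Hom AC a b -> @Hom AC a b;
  zob : Ob AC;
  heq_refl : forall a b (f : @Hom AC a b), heq f f;
  heq_sym : forall a b (f g : @Hom AC a b), heq f g -> heq g f;
  heq_trans : forall a b (f g h : @Hom AC a b), heq f g -> heq g h -> heq f h;
  comp_resp : forall a b c (f f' : @Hom AC a b) (g g' : @Hom AC b c),
      heq f f' -> heq g g' -> heq (comp g f) (comp g' f');
  add_resp : forall a b (f f' g g' : @Hom AC a b),
      heq f f' -> heq g g' -> heq (hadd f g) (hadd f' g');
  opp_resp : forall a b (f f' : @Hom AC a b), heq f f' -> heq (hopp a b f) (hopp a b f');
  compA : forall a b c d (f : @Hom AC a b) (g : @Hom AC b c) (h : @Hom AC c d),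
      heq (comp h (comp g f)) (comp (comp h g) f);
  comp1l : forall a b (f : @Hom AC a b), heq (comp (idm b) f) f;
  comp1r : forall a b (f : @Hom AC a b), heq (comp f (idm a)) f;
  addA : forall a b (f g h : @Hom AC a b), heq (hadd f (hadd g h)) (hadd (hadd f g) h);
  addC : forall a b (f g : @Hom AC a b), heq (hadd f g) (hadd g f);
  add0l : forall a b (f : @Hom AC a b), heq (hadd (hzero a b) f) f;
  addNl : forall a b (f : @Hom AC a b), heq (hadd (hopp a b f) f) (hzero a b);
  distl : forall a b c (f : @Hom AC a b) (g g' : @Hom AC b c),
      heq (comp (hadd g g') f) (hadd (comp g f) (comp g' f));
  distr : forall a b c (f f' : @Hom AC a b) (g : @Hom AC b c),
      heq (comp g (hadd f f')) (hadd (comp g f) (comp g f'));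
  comp0l : forall a b c (f : @Hom AC a b), heq (comp (hzero b c) f) (hzero a c);
  comp0r : forall a b c (g : @Hom AC b c), heq (comp g (hzero a b)) (hzero a c);
  zob_src : forall a (u v : @Hom AC zob a), heq u v;
  zob_tgt : forall a (u v : @Hom AC a zob), heq u v }.

Arguments hopp {a0 a b} _.

(* binary biproducts: together with the above, X is an additive category *)
Definition has_biproducts (X : AddCat) : Prop :=
  forall a b : Ob X, exists (p : Ob X) (i1 : @Hom X a p) (i2 : @Hom X b p)
    (p1 : @Hom X p a) (p2 : @Hom X p b),
    heq (comp p1 i1) (idm a) /\ heq (comp p2 i2) (idm b) /\
    heq (comp p1 i2) (hzero b a) /\ heq (comp p2 i1) (hzero a b) /\
    heq (hadd (comp i1 p1) (comp i2 p2)) (idm p).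

Definition opA (X : AddCat) : AddCat.
Proof.
  refine (@MkAdd (opR X) (fun a b f => @hopp X b a f) (zob X)
    _ _ _ _ _ _ _ _ _ _ _ _ _ _ _ _ _ _ _); simpl; intros.
  - apply heq_refl.
  - apply heq_sym; assumption.
  - eapply heq_trans; eassumption.
  - apply comp_resp; assumption.
  - apply add_resp; assumption.
  - apply opp_resp; assumption.
  - apply heq_sym, compA.
  - apply comp1r.
  - apply comp1l.
  - apply addA.
  - apply addC.
  - apply add0l.
  - apply addNl.
  - apply distr.
  - apply distl.
  - apply comp0r.
  - apply comp0l.
  - apply zob_tgt.
  - apply zob_src.
Defined.

Record AOb (X : AddCat) := MkAOb {
  o1 : Ob X; o2 : Ob X; o3 : Ob X;
  m1 : @Hom X o1 o2; m2 : @Hom X o2 o3 }.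
Arguments MkAOb {X} o1 o2 o3 m1 m2.
Arguments o1 {X} _. Arguments o2 {X} _. Arguments o3 {X} _.
Arguments m1 {X} _. Arguments m2 {X} _.

Record AHom (X : AddCat) (P Q : AOb X) := MkAHom {
  a1 : @Hom X (o1 P) (o1 Q);
  a2 : @Hom X (o2 P) (o2 Q);
  a3 : @Hom X (o3 P) (o3 Q);
  sq1 : heq (comp (m1 Q) a1) (comp a2 (m1 P));
  sq2 : heq (comp a3 (m2 P)) (comp (m2 Q) a2) }.
Arguments AHom {X} P Q.
Arguments MkAHom {X P Q} a1 a2 a3 sq1 sq2.
Arguments a1 {X P Q} _. Arguments a2 {X P Q} _. Arguments a3 {X P Q} _.
Arguments sq1 {X P Q} _. Arguments sq2 {X P Q} _.

Definition Aheq (X : AddCat) (P Q : AOb X) (al be : AHom P Q) : Prop :=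
  exists (s : @Hom X (o2 P) (o1 Q)) (t : @Hom X (o3 P) (o2 Q)),
    heq (hadd (a2 al) (hopp (a2 be))) (hadd (comp (m1 Q) s) (comp t (m2 P))).

Definition Aid (X : AddCat) (P : AOb X) : AHom P P.
Proof.
  refine (MkAHom (idm _) (idm _) (idm _) _ _).
  - eapply heq_trans; [apply comp1r|]. apply heq_sym, comp1l.
  - eapply heq_trans; [apply comp1l|]. apply heq_sym, comp1r.
Defined.

Definition Acomp (X : AddCat) (P Q R : AOb X) (be : AHom Q R) (al : AHom P Q)
  : AHom P R.
Proof.
  refine (MkAHom (comp (a1 be) (a1 al)) (comp (a2 be) (a2 al))
                 (comp (a3 be) (a3 al)) _ _).
  - eapply heq_trans; [apply compA|].
    eapply heq_trans; [apply comp_resp; [apply heq_refl | apply (sq1 be)]|].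
    eapply heq_trans; [apply heq_sym, compA|].
    eapply heq_trans; [apply comp_resp; [apply (sq1 al) | apply heq_refl]|].
    apply compA.
  - eapply heq_trans; [apply heq_sym, compA|].
    eapply heq_trans; [apply comp_resp; [apply (sq2 al) | apply heq_refl]|].
    eapply heq_trans; [apply compA|].
    eapply heq_trans; [apply comp_resp; [apply heq_refl | apply (sq2 be)]|].
    apply heq_sym, compA.
Defined.

Definition Azero (X : AddCat) (P Q : AOb X) : AHom P Q.
Proof.
  refine (MkAHom (hzero _ _) (hzero _ _) (hzero _ _) _ _).
  - eapply heq_trans; [apply comp0r|]. apply heq_sym, comp0l.
  - eapply heq_trans; [apply comp0l|]. apply heq_sym, comp0r.
Defined.

Definition Aadd (X : AddCat) (P Q : AOb X) (al be : AHom P Q) : AHom P Q.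
Proof.
  refine (MkAHom (hadd (a1 al) (a1 be)) (hadd (a2 al) (a2 be))
                 (hadd (a3 al) (a3 be)) _ _).
  - eapply heq_trans; [apply distr|].
    eapply heq_trans; [apply add_resp; [apply (sq1 al) | apply (sq1 be)]|].
    apply heq_sym, distl.
  - eapply heq_trans; [apply distl|].
    eapply heq_trans; [apply add_resp; [apply (sq2 al) | apply (sq2 be)]|].
    apply heq_sym, distr.
Defined.

Definition Adel (X : AddCat) : RawAdd :=
  MkRaw (AOb X) (@AHom X) (@Aheq X) (@Aid X) (@Acomp X) (@Azero X) (@Aadd X).

Record Functor (A B : RawAdd) := MkFunctor {
  Fob : Ob A -> Ob B;
  Fmor : forall a b : Ob A, @Hom A a b -> @Hom B (Fob a) (Fob b) }.
Arguments MkFunctor {A B} Fob Fmor.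
Arguments Fob {A B} _ _.
Arguments Fmor {A B} _ {a b} _.

Definition fcomp (A B C : RawAdd) (G : Functor B C) (F : Functor A B)
  : Functor A C :=
  MkFunctor (fun a => Fob G (Fob F a)) (fun a b f => Fmor G (Fmor F f)).
Arguments fcomp {A B C} G F.

Definition is_functor (A B : RawAdd) (F : Functor A B) : Prop :=
  (forall a b (f g : @Hom A a b), heq f g -> heq (Fmor F f) (Fmor F g)) /\
  (forall a, heq (Fmor F (idm a)) (idm (Fob F a))) /\
  (forall a b c (f : @Hom A a b) (g : @Hom A b c),
      heq (Fmor F (comp g f)) (comp (Fmor F g) (Fmor F f))).
Arguments is_functor {A B} F.

Definition is_additive (A B : RawAdd) (F : Functor A B) : Prop :=
  forall a b (f g : @Hom A a b), heq (Fmor F (hadd f g)) (hadd (Fmor F f) (Fmor F g)).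
Arguments is_additive {A B} F.

Definition is_kernel (A : RawAdd) (a b K : Ob A) (f : @Hom A a b) (k : @Hom A K a)
  : Prop :=
  heq (comp f k) (hzero K b) /\
  forall (T : Ob A) (t : @Hom A T a), heq (comp f t) (hzero T b) ->
    exists u : @Hom A T K, heq (comp k u) t /\
      forall u' : @Hom A T K, heq (comp k u') t -> heq u' u.
Arguments is_kernel {A a b K} f k.

Definition is_cokernel (A : RawAdd) (a b Q : Ob A) (f : @Hom A a b) (c : @Hom A b Q)
  : Prop :=
  heq (comp c f) (hzero a Q) /\
  forall (T : Ob A) (t : @Hom A b T), heq (comp t f) (hzero a T) ->
    exists u : @Hom A Q T, heq (comp u c) t /\
      forall u' : @Hom A Q T, heq (comp u' c) t -> heq u' u.
Arguments is_cokernel {A a b Q} f c.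

(* exact functor between abelian categories: additive, preserving kernels and
   cokernels (for a contravariant functor A -> B, i.e. a functor A -> B^op,
   this means: kernels go to cokernels and cokernels to kernels in B) *)
Definition is_exact (A B : RawAdd) (F : Functor A B) : Prop :=
  is_additive F /\
  (forall a b K (f : @Hom A a b) (k : @Hom A K a),
      is_kernel f k -> is_kernel (Fmor F f) (Fmor F k)) /\
  (forall a b Q (f : @Hom A a b) (c : @Hom A b Q),
      is_cokernel f c -> is_cokernel (Fmor F f) (Fmor F c)).
Arguments is_exact {A B} F.

Definition nat_iso (A B : RawAdd) (G H : Functor A B) : Prop :=
  exists (eta : forall a, @Hom B (Fob G a) (Fob H a))
         (th : forall a, @Hom B (Fob H a) (Fob G a)),
    (forall a, heq (comp (th a) (eta a)) (idm (Fob G a)) /\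
               heq (comp (eta a) (th a)) (idm (Fob H a))) /\
    (forall a b (f : @Hom A a b),
        heq (comp (eta b) (Fmor G f)) (comp (Fmor H f) (eta a))).
Arguments nat_iso {A B} G H.

Definition jfun (X : AddCat) : Functor X (Adel X).
Proof.
  refine (@MkFunctor X (Adel X)
    (fun x => MkAOb (zob X) x (zob X) (hzero (zob X) x) (hzero x (zob X)))
    (fun x y f => @MkAHom X (MkAOb (zob X) x (zob X) (hzero (zob X) x) (hzero x (zob X))) (MkAOb (zob X) y (zob X) (hzero (zob X) y) (hzero y (zob X))) (idm (zob X)) f (idm (zob X)) _ _)).
  - apply zob_src.
  - apply zob_tgt.
Defined.

(* j^op o d : X -> III-bar(X^op), contravariant, i.e. a functor
   X -> (III-bar(X^op))^op *)
Definition jop_d (X : AddCat) : Functor X (opR (Adel (opA X))) :=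
  @MkFunctor X (opR (Adel (opA X))) (fun x : Ob X => Fob (jfun (opA X)) x)
    (fun (x y : Ob X) (f : @Hom X x y) =>
       @Fmor (opA X) (Adel (opA X)) (jfun (opA X)) y x f).

Definition dIII (X : AddCat) : Functor (Adel X) (opR (Adel (opA X))) :=
  @MkFunctor (Adel X) (opR (Adel (opA X)))
    (fun P : AOb X => @MkAOb (opA X) (o3 P) (o2 P) (o1 P) (m2 P) (m1 P))
    (fun P Q (al : AHom P Q) =>
       @MkAHom (opA X) (@MkAOb (opA X) (o3 Q) (o2 Q) (o1 Q) (m2 Q) (m1 Q))
                       (@MkAOb (opA X) (o3 P) (o2 P) (o1 P) (m2 P) (m1 P))
               (a3 al) (a2 al) (a1 al) (sq2 al) (sq1 al)).

(* Main.v *)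
Require Import Defs.
From Stdlib Require Import Setoid Morphisms ClassicalEpsilon.

Class IsCat (B : RawAdd) : Prop := {
  c_refl : forall a b (f : @Hom B a b), heq f f;
  c_sym : forall a b (f g : @Hom B a b), heq f g -> heq g f;
  c_trans : forall a b (f g h : @Hom B a b), heq f g -> heq g h -> heq f h;
  c_resp : forall a b c (f f' : @Hom B a b) (g g' : @Hom B b c),
      heq f f' -> heq g g' -> heq (comp g f) (comp g' f');
  c_assoc : forall a b c d (f : @Hom B a b) (g : @Hom B b c) (h : @Hom B c d),
      heq (comp h (comp g f)) (comp (comp h g) f);
  c_idl : forall a b (f : @Hom B a b), heq (comp (idm b) f) f;
  c_idr : forall a b (f : @Hom B a b), heq (comp f (idm a)) f;
  c_0l : forall a b c (f : @Hom B a b), heq (comp (hzero b c) f) (hzero a c);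
  c_0r : forall a b c (g : @Hom B b c), heq (comp g (hzero a b)) (hzero a c) }.

Global Instance heq_Equiv {B} `{IsCat B} a b : Equivalence (@heq B a b).
Proof. split; red; intros; [apply c_refl|apply c_sym; auto|eapply c_trans; eauto]. Qed.

Global Instance comp_Proper {B} `{IsCat B} a b c :
  Proper (heq ==> heq ==> heq) (@comp B a b c).
Proof. intros g g' Hg f f' Hf. apply c_resp; auto. Qed.

Global Instance AddCat_IsCat (X : AddCat) : IsCat (AC X).
Proof. split; intros.
  apply heq_refl. apply heq_sym; auto. eapply heq_trans; eauto.
  apply comp_resp; auto. apply compA. apply comp1l. apply comp1r.
  apply comp0l. apply comp0r. Qed.

Global Instance hadd_Proper (X : AddCat) a b :
  Proper (heq ==> heq ==> heq) (@hadd (AC X) a b).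
Proof. intros f f' Hf g g' Hg. apply add_resp; auto. Qed.

Global Instance hopp_Proper (X : AddCat) a b :
  Proper (heq ==> heq) (@hopp X a b).
Proof. intros f f' Hf. apply opp_resp; auto. Qed.

Global Instance IsCat_op B `{IsCat B} : IsCat (opR B).
Proof. split; simpl; intros.
  apply c_refl. apply c_sym; auto. eapply c_trans; eauto.
  apply c_resp; auto. symmetry; apply c_assoc. apply c_idr. apply c_idl.
  apply c_0r. apply c_0l. Qed.

Section AddL.
Variable X : AddCat.
Implicit Types a b c : Ob X.

Lemma add0r a b (f : @Hom X a b) : heq (hadd f (hzero a b)) f.
Proof. rewrite addC. apply add0l. Qed.

Lemma addNr a b (f : @Hom X a b) : heq (hadd f (hopp f)) (hzero a b).
Proof. rewrite addC. apply addNl. Qed.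

Lemma opp_uniq a b (f g : @Hom X a b) : heq (hadd f g) (hzero a b) -> heq g (hopp f).
Proof. intro E.
  rewrite <- (add0l _ _ _ g). rewrite <- (addNl _ _ _ f).
  rewrite <- addA. rewrite E. apply add0r. Qed.

Lemma oppK a b (f : @Hom X a b) : heq (hopp (hopp f)) f.
Proof. symmetry. apply opp_uniq. apply addNl. Qed.

Lemma add4 a b (p q r s : @Hom X a b) :
  heq (hadd (hadd p q) (hadd r s)) (hadd (hadd p r) (hadd q s)).
Proof.
  rewrite <- !addA. apply add_resp; [reflexivity|].
  rewrite !addA. apply add_resp; [|reflexivity]. apply addC. Qed.

Lemma oppD a b (f g : @Hom X a b) : heq (hopp (hadd f g)) (hadd (hopp f) (hopp g)).
Proof. symmetry. apply opp_uniq. rewrite add4. rewrite !addNr. apply add0l. Qed.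

Lemma comp_oppl a b c (f : @Hom X a b) (g : @Hom X b c) :
  heq (comp (hopp g) f) (hopp (comp g f)).
Proof. apply opp_uniq. rewrite <- distl. rewrite addNr. apply comp0l. Qed.

Lemma comp_oppr a b c (f : @Hom X a b) (g : @Hom X b c) :
  heq (comp g (hopp f)) (hopp (comp g f)).
Proof. apply opp_uniq. rewrite <- distr. rewrite addNr. apply comp0r. Qed.

Lemma opp0 a b : heq (hopp (hzero a b)) (hzero a b).
Proof. symmetry. apply opp_uniq. apply add0l. Qed.

Lemma sub_sym a b (x y : @Hom X a b) :
  heq (hadd y (hopp x)) (hopp (hadd x (hopp y))).
Proof. rewrite oppD, oppK. apply addC. Qed.

Lemma sub_trans a b (x y z : @Hom X a b) :
  heq (hadd x (hopp z)) (hadd (hadd x (hopp y)) (hadd y (hopp z))).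
Proof. rewrite <- addA. rewrite (addA _ _ _ (hopp y)). rewrite addNl, add0l.
  reflexivity. Qed.

Lemma sub_comp a b c (x x' : @Hom X a b) (y y' : @Hom X b c) :
  heq (hadd (comp y x) (hopp (comp y' x')))
      (hadd (comp y (hadd x (hopp x'))) (comp (hadd y (hopp y')) x')).
Proof. rewrite distr, distl, comp_oppr, comp_oppl. apply sub_trans. Qed.

Lemma sub_eq a b (x y : @Hom X a b) : heq x y -> heq (hadd x (hopp y)) (hzero a b).
Proof. intro E. rewrite E. apply addNr. Qed.

End AddL.

Section AdelCat.
Variable Y : AddCat.

Definition Null (P Q : AOb Y) (h : @Hom Y (o2 P) (o2 Q)) : Prop :=
  exists (s : @Hom Y (o2 P) (o1 Q)) (t : @Hom Y (o3 P) (o2 Q)),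
    heq h (hadd (comp (m1 Q) s) (comp t (m2 P))).

Lemma Null_resp P Q h h' : heq h h' -> Null P Q h -> Null P Q h'.
Proof. intros E [s [t H]]. exists s, t. rewrite <- E. exact H. Qed.

Lemma Null0 P Q : Null P Q (hzero _ _).
Proof. exists (hzero _ _), (hzero _ _). rewrite comp0r, comp0l. symmetry; apply add0l. Qed.

Lemma NullD P Q h h' : Null P Q h -> Null P Q h' -> Null P Q (hadd h h').
Proof. intros [s [t H]] [s' [t' H']]. exists (hadd s s'), (hadd t t').
  rewrite H, H', distr, distl. apply add4. Qed.

Lemma NullN P Q h : Null P Q h -> Null P Q (hopp h).
Proof. intros [s [t H]]. exists (hopp s), (hopp t).
  rewrite H, oppD, comp_oppr, comp_oppl. reflexivity. Qed.

Lemma Null_compl P Q R (be : AHom Q R) h : Null P Q h -> Null P R (comp (a2 be) h).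
Proof. intros [s [t H]]. exists (comp (a1 be) s), (comp (a2 be) t).
  rewrite H, distr. apply add_resp.
  - rewrite compA. rewrite <- (sq1 be). symmetry; apply compA.
  - apply compA. Qed.

Lemma Null_compr P Q R (al : AHom P Q) h : Null Q R h -> Null P R (comp h (a2 al)).
Proof. intros [s [t H]]. exists (comp s (a2 al)), (comp t (a3 al)).
  rewrite H, distl. apply add_resp.
  - symmetry; apply compA.
  - transitivity (comp t (comp (m2 Q) (a2 al))). symmetry; apply compA. rewrite <- (sq2 al). apply compA. Qed.

Lemma Aheq_of_heq P Q (al be : AHom P Q) : heq (a2 al) (a2 be) -> Aheq Y P Q al be.
Proof. intro E. unfold Aheq. apply (Null_resp P Q (hzero _ _)).
  symmetry. apply sub_eq. exact E. apply Null0. Qed.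

Global Instance Adel_IsCat : IsCat (Adel Y).
Proof. split; simpl; intros.
  - apply Aheq_of_heq. reflexivity.
  - unfold Aheq in *. eapply Null_resp. symmetry; apply sub_sym. apply NullN. exact H.
  - unfold Aheq in *. eapply Null_resp. symmetry; apply (sub_trans _ _ _ _ (a2 g)).
    apply NullD; auto.
  - unfold Aheq in *. simpl. eapply Null_resp. symmetry; apply sub_comp.
    apply NullD. apply Null_compl; auto. apply Null_compr; auto.
  - apply Aheq_of_heq. simpl. apply compA.
  - apply Aheq_of_heq. simpl. apply comp1l.
  - apply Aheq_of_heq. simpl. apply comp1r.
  - apply Aheq_of_heq. simpl. apply comp0l.
  - apply Aheq_of_heq. simpl. apply comp0r.
Qed.

End AdelCat.

Section Abs.
Context {B : RawAdd} {HB : IsCat B}.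

Lemma ker_mono a b K (f : @Hom B a b) (k : @Hom B K a) :
  is_kernel f k -> forall T (u u' : @Hom B T K), heq (comp k u) (comp k u') -> heq u u'.
Proof. intros [H0 H1] T u u' E.
  destruct (H1 T (comp k u)) as [v [Hv Hu]].
  - rewrite c_assoc, H0. apply c_0l.
  - rewrite (Hu u). symmetry. apply Hu. symmetry; exact E. reflexivity. Qed.

Lemma ker_transfer a b K a' b' K' (f : @Hom B a b) (k : @Hom B K a)
  (f' : @Hom B a' b') (k' : @Hom B K' a')
  (ea : @Hom B a a') (ta : @Hom B a' a) (eb : @Hom B b b') (tb : @Hom B b' b) :
  is_kernel f k -> is_kernel f' k' ->
  heq (comp ta ea) (idm a) -> heq (comp ea ta) (idm a') ->
  heq (comp tb eb) (idm b) ->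
  heq (comp eb f) (comp f' ea) ->
  exists (eK : @Hom B K K') (tK : @Hom B K' K),
    heq (comp tK eK) (idm K) /\ heq (comp eK tK) (idm K') /\
    heq (comp k' eK) (comp ea k).
Proof. intros Hk Hk' A1 A2 B1 N.
  assert (N' : heq (comp f ta) (comp tb f')).
  { transitivity (comp (comp tb eb) (comp f ta)).
    rewrite B1; symmetry; apply c_idl.
    rewrite <- c_assoc, (c_assoc _ _ _ _ ta f eb), N, <- c_assoc, A2, c_idr.
    reflexivity. }
  pose proof Hk as [K0 K1]. pose proof Hk' as [K0' K1'].
  destruct (K1' K (comp ea k)) as [eK [HeK _]].
  { rewrite c_assoc, <- N, <- c_assoc, K0. apply c_0r. }
  destruct (K1 K' (comp ta k')) as [tK [HtK _]].
  { rewrite c_assoc, N', <- c_assoc, K0'. apply c_0r. }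
  exists eK, tK. split; [|split]; auto.
  - apply (ker_mono _ _ _ _ _ Hk). rewrite c_assoc, HtK, <- c_assoc, HeK, c_assoc, A1.
    rewrite c_idl, c_idr. reflexivity.
  - apply (ker_mono _ _ _ _ _ Hk'). rewrite c_assoc, HeK, <- c_assoc, HtK, c_assoc, A2.
    rewrite c_idl, c_idr. reflexivity.
Qed.

End Abs.

Lemma coker_epi {B} `{IsCat B} a b Q (f : @Hom B a b) (c : @Hom B b Q) :
  is_cokernel f c -> forall T (u u' : @Hom B Q T), heq (comp u c) (comp u' c) -> heq u u'.
Proof. intros Hc T u u' E. exact (@ker_mono (opR B) _ b a Q f c Hc T u u' E). Qed.

Lemma coker_transfer {B} `{IsCat B} a b Q a' b' Q' (f : @Hom B a b) (c : @Hom B b Q)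
  (f' : @Hom B a' b') (c' : @Hom B b' Q')
  (ea : @Hom B a a') (ta : @Hom B a' a) (eb : @Hom B b b') (tb : @Hom B b' b) :
  is_cokernel f c -> is_cokernel f' c' ->
  heq (comp ea ta) (idm a') ->
  heq (comp tb eb) (idm b) -> heq (comp eb tb) (idm b') ->
  heq (comp eb f) (comp f' ea) ->
  exists (eQ : @Hom B Q Q') (tQ : @Hom B Q' Q),
    heq (comp tQ eQ) (idm Q) /\ heq (comp eQ tQ) (idm Q') /\
    heq (comp eQ c) (comp c' eb).
Proof. intros Hc Hc' A2 B1 B2 N.
  destruct (@ker_transfer (opR B) _ b' a' Q' b a Q f' c' f c eb tb ea ta Hc' Hc B2 B1 A2)
    as [eQ [tQ [E1 [E2 E3]]]].
  - simpl. symmetry. exact N.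
  - exists eQ, tQ. simpl in *. split; [|split]; auto.
Qed.

Section IsoPres.
Context {A B : RawAdd} {HA : IsCat A} {HB : IsCat B} (D : Functor A B).
Hypothesis Df : is_functor D.
Hypothesis D0 : forall a b, heq (Fmor D (hzero a b)) (hzero _ _).
Hypothesis Dsurj : forall T, exists a, Fob D a = T.
Hypothesis Dfull : forall a b (h : @Hom B (Fob D a) (Fob D b)), exists f, heq (Fmor D f) h.
Hypothesis Dfaith : forall a b (f g : @Hom A a b), heq (Fmor D f) (Fmor D g) -> heq f g.

Lemma iso_pres_ker a b K (f : @Hom A a b) (k : @Hom A K a) :
  is_kernel f k -> is_kernel (Fmor D f) (Fmor D k).
Proof. destruct Df as [Dr [Di Dc]]. intros [K0 K1]. split.
  - rewrite <- Dc. rewrite (Dr _ _ _ _ K0). apply D0.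
  - intros T t Ht. destruct (Dsurj T) as [c Ec]. subst T.
    destruct (Dfull _ _ t) as [t0 Ht0].
    destruct (K1 c t0) as [u0 [Hu0 Uu0]].
    { apply Dfaith. rewrite Dc, Ht0, Ht. symmetry; apply D0. }
    exists (Fmor D u0). split.
    + rewrite <- Dc, (Dr _ _ _ _ Hu0). exact Ht0.
    + intros u' Hu'. destruct (Dfull _ _ u') as [u1 Hu1]. rewrite <- Hu1.
      apply Dr. apply Uu0. apply Dfaith. rewrite Dc, Hu1, Hu', Ht0. reflexivity.
Qed.
End IsoPres.

Definition opF {A B : RawAdd} (D : Functor A B) : Functor (opR A) (opR B) :=
  @MkFunctor (opR A) (opR B) (Fob D) (fun a b f => @Fmor A B D b a f).

Lemma iso_pres_coker {A B : RawAdd} {HA : IsCat A} {HB : IsCat B} (D : Functor A B) :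
  is_functor D ->
  (forall a b, heq (Fmor D (hzero a b)) (hzero _ _)) ->
  (forall T, exists a, Fob D a = T) ->
  (forall a b (h : @Hom B (Fob D a) (Fob D b)), exists f, heq (Fmor D f) h) ->
  (forall a b (f g : @Hom A a b), heq (Fmor D f) (Fmor D g) -> heq f g) ->
  forall a b Q (f : @Hom A a b) (c : @Hom A b Q),
  is_cokernel f c -> is_cokernel (Fmor D f) (Fmor D c).
Proof. intros [Dr [Di Dc]] D0 Ds Dfu Dfa a b Q f c Hc.
  apply (iso_pres_ker (A:=opR A) (B:=opR B) (opF D)); auto.
  split; [|split]; simpl; intros; auto.
  - intros x y. exact (D0 y x).
  - intros x y h. exact (Dfu y x h).
  - intros x y g1 g2 E. exact (Dfa y x g1 g2 E).
Qed.

Section D.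
Variable X : AddCat.

Lemma D_heq (P Q : AOb X) (al be : AHom P Q) :
  Aheq X P Q al be <-> heq (Fmor (dIII X) al) (Fmor (dIII X) be).
Proof. unfold Aheq. simpl. split; intros [s [t H]]; exists t, s; simpl in *.
  - rewrite H. apply addC.
  - rewrite H. apply addC.
Qed.
End D.

Section D2.
Variable X : AddCat.
Let D := dIII X.

Lemma D_functor : is_functor D.
Proof. split; [|split].
  - intros a b f g E. apply D_heq. exact E.
  - intros a. apply Aheq_of_heq. simpl. reflexivity.
  - intros a b c f g. apply Aheq_of_heq. simpl. reflexivity.
Qed.

Lemma D_zero : forall a b, heq (Fmor D (hzero a b)) (hzero _ _).
Proof. intros. apply Aheq_of_heq. simpl. reflexivity. Qed.

Lemma D_surj : forall T, exists a, Fob D a = T.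
Proof. intros [x1 x2 x3 f1 f2]. exists (@MkAOb X x3 x2 x1 f2 f1). reflexivity. Qed.

Lemma D_full : forall a b (h : @Hom _ (Fob D a) (Fob D b)), exists f, heq (Fmor D f) h.
Proof. intros a b [h1 h2 h3 s1 s2].
  exists (@MkAHom X a b h3 h2 h1 s2 s1). apply Aheq_of_heq. simpl. reflexivity. Qed.

Lemma D_faith : forall a b (f g : @Hom (Adel X) a b), heq (Fmor D f) (Fmor D g) -> heq f g.
Proof. intros a b f g E. apply D_heq. exact E. Qed.

Lemma D_exact : is_exact D.
Proof. split; [|split].
  - intros a b f g. apply Aheq_of_heq. simpl. reflexivity.
  - intros. apply (iso_pres_ker D D_functor D_zero D_surj D_full D_faith). auto.
  - intros. apply (iso_pres_coker D D_functor D_zero D_surj D_full D_faith). auto.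
Qed.

Lemma D_j : nat_iso (fcomp D (jfun X)) (jop_d X).
Proof. exists (fun x => idm _), (fun x => idm _). split.
  - intros a. split; apply c_idl.
  - intros a b f. apply Aheq_of_heq. simpl. rewrite comp1l, comp1r. reflexivity.
Qed.
End D2.

Section Pres.
Variable X : AddCat.

Definition jo (x : Ob X) : AOb X := Fob (jfun X) x.
Definition KO {x y : Ob X} (f : @Hom X x y) : AOb X := MkAOb (zob X) x y (hzero (zob X) x) f.

Definition kk {x y : Ob X} (f : @Hom X x y) : AHom (KO f) (jo x) :=
  @MkAHom X (KO f) (jo x) (idm (zob X)) (idm x) (hzero y (zob X))
    (zob_src _ _ _ _) (zob_tgt _ _ _ _).

Lemma a2_comp P Q R (g : @Hom (Adel X) Q R) (f : @Hom (Adel X) P Q) :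
  a2 (@comp (Adel X) _ _ _ g f) = comp (a2 g) (a2 f).
Proof. reflexivity. Qed.
Lemma a2_zero P Q : a2 (@hzero (Adel X) P Q) = hzero _ _.
Proof. reflexivity. Qed.
Lemma a2_id P : a2 (@idm (Adel X) P) = idm _.
Proof. reflexivity. Qed.
Lemma a2_j x y (f : @Hom X x y) : a2 (Fmor (jfun X) f) = f.
Proof. reflexivity. Qed.
Lemma a2_kk x y (f : @Hom X x y) : a2 (kk f) = idm x.
Proof. reflexivity. Qed.
Lemma m1_jo x : m1 (jo x) = hzero (zob X) x.
Proof. reflexivity. Qed.
Lemma m1_j x : m1 (Fob (jfun X) x) = hzero (zob X) x.
Proof. reflexivity. Qed.
Lemma m1_KO x y (f : @Hom X x y) : m1 (KO f) = hzero (zob X) x.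
Proof. reflexivity. Qed.
Lemma m2_KO x y (f : @Hom X x y) : m2 (KO f) = f.
Proof. reflexivity. Qed.
Hint Rewrite a2_comp a2_zero a2_id a2_j a2_kk m1_jo m1_j m1_KO m2_KO : adel.

Lemma kk_ker x y (f : @Hom X x y) : @is_kernel (Adel X) _ _ _ (Fmor (jfun X) f) (kk f).
Proof. split.
  - hnf. exists (hzero x (zob X)), (idm y). autorewrite with adel.
    rewrite opp0, add0r, comp1r, comp0l, add0l, comp1l. reflexivity.
  - intros T t [s [t' Ht]]. autorewrite with adel in Ht.
    rewrite opp0, add0r, comp0l, add0l in Ht.
    assert (E1 : heq (comp (m1 (KO f)) (hzero (o1 T) (zob X))) (comp (a2 t) (m1 T))).
    { rewrite <- (sq1 t). simpl. rewrite !comp0l. reflexivity. }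
    refine (ex_intro _ (@MkAHom X T (KO f) (hzero _ _) (a2 t) t' E1 (c_sym _ _ _ _ Ht)) _).
    split.
    + apply Aheq_of_heq. autorewrite with adel. apply comp1l.
    + intros u' [s2 [t2 H2]]. autorewrite with adel in H2. exists s2, t2. autorewrite with adel.
      rewrite <- H2, comp1l. reflexivity.
Qed.

Definition iota (P : AOb X) : AHom (KO (m2 P)) P.
Proof. refine (@MkAHom X (KO (m2 P)) P (hzero _ _) (idm _) (idm _) _ _).
  - apply zob_src.
  - simpl. rewrite comp1l, comp1r. reflexivity.
Defined.

Definition kap (P : AOb X) : AHom (KO (comp (m2 P) (m1 P))) (KO (m2 P)).
Proof. refine (@MkAHom X (KO (comp (m2 P) (m1 P))) (KO (m2 P)) (idm _) (m1 P) (idm _) _ _).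
  - apply zob_src.
  - simpl. rewrite comp1l. reflexivity.
Defined.

Lemma addKl a b (x y : @Hom X a b) : heq (hadd (hadd x y) (hopp x)) y.
Proof. rewrite addC, addA, addNl, add0l. reflexivity. Qed.

Lemma a2_iota P : a2 (iota P) = idm _. Proof. reflexivity. Qed.
Lemma a2_kap P : a2 (kap P) = m1 P. Proof. reflexivity. Qed.
Hint Rewrite a2_iota a2_kap : adel.

Lemma iota_coker P : @is_cokernel (Adel X) _ _ _ (kap P) (iota P).
Proof. split.
  - hnf. exists (idm _), (hzero _ _). autorewrite with adel.
    rewrite opp0, add0r, comp1l, comp1r, comp0l, add0r. reflexivity.
  - intros T t [s [t' Ht]]. autorewrite with adel in Ht. rewrite opp0, add0r in Ht.
    assert (E1 : heq (comp (m1 T) s) (comp (hadd (a2 t) (hopp (comp t' (m2 P)))) (m1 P))).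
    { rewrite distl, Ht, comp_oppl, <- compA, <- addA, addNr, add0r. reflexivity. }
    assert (E2 : heq (comp (hadd (a3 t) (hopp (comp (m2 T) t'))) (m2 P))
                     (comp (m2 T) (hadd (a2 t) (hopp (comp t' (m2 P)))))).
    { rewrite distl, distr, comp_oppl, comp_oppr. apply add_resp.
      exact (sq2 t). apply opp_resp. symmetry; apply compA. }
    refine (ex_intro _ (@MkAHom X P T s _ _ E1 E2) _). split.
    + hnf. exists (hzero _ _), (hopp t'). autorewrite with adel. cbn [a2].
      rewrite comp1r, addKl, comp0r, add0l, comp_oppl. reflexivity.
    + intros u' [s2 [t2 H2]]. autorewrite with adel in H2. exists s2, (hadd t2 t'). autorewrite with adel. cbn [a2].
      rewrite comp1r in H2. rewrite oppD, oppK, addA, H2, distl, addA. reflexivity.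
Qed.

Lemma kap_nat P : @heq (Adel X) _ _ (@comp (Adel X) _ _ _ (kk (m2 P)) (kap P))
   (@comp (Adel X) _ _ _ (Fmor (jfun X) (m1 P)) (kk (comp (m2 P) (m1 P)))).
Proof. apply Aheq_of_heq. autorewrite with adel. rewrite comp1l, comp1r. reflexivity. Qed.

Definition Kal {P Q : AOb X} (al : AHom P Q) : AHom (KO (m2 P)) (KO (m2 Q)).
Proof. refine (@MkAHom X (KO (m2 P)) (KO (m2 Q)) (idm _) (a2 al) (a3 al) _ (sq2 al)).
  apply zob_src. Defined.

Lemma a2_Kal P Q (al : AHom P Q) : a2 (Kal al) = a2 al. Proof. reflexivity. Qed.
Hint Rewrite a2_Kal : adel.

Lemma Kal_nat P Q (al : AHom P Q) : @heq (Adel X) _ _ (@comp (Adel X) _ _ _ (kk (m2 Q)) (Kal al))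
   (@comp (Adel X) _ _ _ (Fmor (jfun X) (a2 al)) (kk (m2 P))).
Proof. apply Aheq_of_heq. autorewrite with adel. rewrite comp1l, comp1r. reflexivity. Qed.

Lemma iota_nat P Q (al : AHom P Q) : @heq (Adel X) _ _ (@comp (Adel X) _ _ _ al (iota P)) (@comp (Adel X) _ _ _ (iota Q) (Kal al)).
Proof. apply Aheq_of_heq. autorewrite with adel. rewrite comp1l, comp1r. reflexivity. Qed.

End Pres.

Lemma cA {B} `{IsCat B} {a b c d} (f : @Hom B a b) {g : @Hom B b c} {h : @Hom B c d} :
  heq (comp h (comp g f)) (comp (comp h g) f).
Proof. apply c_assoc. Qed.

Section U.
Variable X : AddCat.
Local Notation B := (opR (Adel (opA X))).
Local Notation D := (dIII X).
Variable F : Functor (Adel X) B.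
Hypothesis HF : is_functor F.
Hypothesis HE : is_exact F.
Variable eta : forall x, @Hom B (Fob F (jo X x)) (Fob D (jo X x)).
Variable th : forall x, @Hom B (Fob D (jo X x)) (Fob F (jo X x)).
Hypothesis Hiso : forall x, heq (comp (th x) (eta x)) (idm _) /\ heq (comp (eta x) (th x)) (idm _).
Hypothesis Hnat : forall x y (f : @Hom X x y),
  heq (comp (eta y) (Fmor F (Fmor (jfun X) f))) (comp (Fmor D (Fmor (jfun X) f)) (eta x)).

Lemma FK_ker x y (f : @Hom X x y) : is_kernel (Fmor F (Fmor (jfun X) f)) (Fmor F (kk X f)).
Proof. destruct HE as [_ [HK _]]. apply HK. apply kk_ker. Qed.
Lemma DK_ker x y (f : @Hom X x y) : is_kernel (Fmor D (Fmor (jfun X) f)) (Fmor D (kk X f)).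
Proof. destruct (D_exact X) as [_ [HK _]]. apply HK. apply kk_ker. Qed.

Lemma K_exists x y (f : @Hom X x y) :
  exists p : @Hom B (Fob F (KO X f)) (Fob D (KO X f)) * @Hom B (Fob D (KO X f)) (Fob F (KO X f)),
    heq (comp (snd p) (fst p)) (idm _) /\ heq (comp (fst p) (snd p)) (idm _) /\
    heq (comp (Fmor D (kk X f)) (fst p)) (comp (eta x) (Fmor F (kk X f))).
Proof.
  destruct (ker_transfer _ _ _ _ _ _ _ _ _ _ (eta x) (th x) (eta y) (th y)
     (FK_ker x y f) (DK_ker x y f) (proj1 (Hiso x)) (proj2 (Hiso x)) (proj1 (Hiso y))
     (Hnat x y f)) as [e [t [E1 [E2 E3]]]].
  exists (e, t). simpl. auto.
Qed.

Definition pK x y (f : @Hom X x y) := proj1_sig (constructive_indefinite_description _ (K_exists x y f)).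
Definition etaK x y (f : @Hom X x y) := fst (pK x y f).
Definition thK x y (f : @Hom X x y) := snd (pK x y f).
Lemma etaK_spec x y (f : @Hom X x y) :
    heq (comp (thK x y f) (etaK x y f)) (idm _) /\ heq (comp (etaK x y f) (thK x y f)) (idm _) /\
    heq (comp (Fmor D (kk X f)) (etaK x y f)) (comp (eta x) (Fmor F (kk X f))).
Proof. exact (proj2_sig (constructive_indefinite_description _ (K_exists x y f))). Qed.

Lemma etaK_nat x y (f : @Hom X x y) x' y' (f' : @Hom X x' y')
  (h : @Hom (Adel X) (KO X f) (KO X f')) (g : @Hom X x x') :
  heq (@comp (Adel X) _ _ _ (kk X f') h) (@comp (Adel X) _ _ _ (Fmor (jfun X) g) (kk X f)) ->
  heq (comp (Fmor D h) (etaK x y f)) (comp (etaK x' y' f') (Fmor F h)).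
Proof. intro Hh. destruct HF as [Fr [Fi Fc]]. destruct (D_functor X) as [Dr [Di Dc]].
  apply (ker_mono _ _ _ _ _ (DK_ker x' y' f')).
  rewrite (cA (etaK x y f)), <- Dc, (Dr _ _ _ _ Hh), Dc.
  rewrite <- (cA (etaK x y f)), (proj2 (proj2 (etaK_spec x y f))).
  rewrite (cA (Fmor F (kk X f))), <- Hnat.
  rewrite <- (cA (Fmor F (kk X f))), <- Fc, <- (Fr _ _ _ _ Hh), Fc.
  rewrite (cA (Fmor F h)), <- (proj2 (proj2 (etaK_spec x' y' f'))).
  symmetry. apply c_assoc.
Qed.

Lemma P_exists (P : AOb X) :
  exists p : @Hom B (Fob F P) (Fob D P) * @Hom B (Fob D P) (Fob F P),
    heq (comp (snd p) (fst p)) (idm _) /\ heq (comp (fst p) (snd p)) (idm _) /\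
    heq (comp (fst p) (Fmor F (iota X P))) (comp (Fmor D (iota X P)) (etaK _ _ (m2 P))).
Proof.
  assert (HFc : is_cokernel (Fmor F (kap X P)) (Fmor F (iota X P))).
  { destruct HE as [_ [_ HC]]. apply HC. apply iota_coker. }
  assert (HDc : is_cokernel (Fmor D (kap X P)) (Fmor D (iota X P))).
  { destruct (D_exact X) as [_ [_ HC]]. apply HC. apply iota_coker. }
  destruct (etaK_spec _ _ (comp (m2 P) (m1 P))) as [A1 [A2 A3]].
  destruct (etaK_spec _ _ (m2 P)) as [B1 [B2 B3]].
  destruct (coker_transfer _ _ _ _ _ _ _ _ _ _ _ _ _ _ HFc HDc A2 B1 B2) as [e [t [E1 [E2 E3]]]].
  - symmetry. apply (etaK_nat _ _ _ _ _ _ (kap X P) (m1 P)). apply kap_nat.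
  - exists (e, t). simpl. auto.
Qed.

Definition pP P := proj1_sig (constructive_indefinite_description _ (P_exists P)).
Definition etaP P := fst (pP P).
Definition thP P := snd (pP P).
Lemma etaP_spec P :
    heq (comp (thP P) (etaP P)) (idm _) /\ heq (comp (etaP P) (thP P)) (idm _) /\
    heq (comp (etaP P) (Fmor F (iota X P))) (comp (Fmor D (iota X P)) (etaK _ _ (m2 P))).
Proof. exact (proj2_sig (constructive_indefinite_description _ (P_exists P))). Qed.

Lemma etaP_nat P Q (al : @Hom (Adel X) P Q) :
  heq (comp (etaP Q) (Fmor F al)) (comp (Fmor D al) (etaP P)).
Proof. destruct HF as [Fr [Fi Fc]]. destruct (D_functor X) as [Dr [Di Dc]].
  assert (HFc : is_cokernel (Fmor F (kap X P)) (Fmor F (iota X P))).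
  { destruct HE as [_ [_ HC]]. apply HC. apply iota_coker. }
  apply (coker_epi _ _ _ _ _ HFc).
  pose proof (iota_nat X P Q al) as Hi.
  rewrite <- (cA (Fmor F (iota X P))), <- Fc, (Fr _ _ _ _ Hi), Fc.
  rewrite (cA (Fmor F (Kal X al))), (proj2 (proj2 (etaP_spec Q))).
  rewrite <- (cA (Fmor F (Kal X al))).
  rewrite <- (etaK_nat _ _ _ _ _ _ (Kal X al) (a2 al) (Kal_nat X P Q al)).
  rewrite (cA (etaK _ _ (m2 P))), <- Dc, <- (Dr _ _ _ _ Hi), Dc.
  rewrite <- (cA (etaK _ _ (m2 P))), <- (proj2 (proj2 (etaP_spec P))).
  apply cA.
Qed.

End U.
Theorem theorem4p3 (X : AddCat) (HX : has_biproducts X) :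
  (is_functor (dIII X) /\ is_exact (dIII X) /\
   nat_iso (fcomp (dIII X) (jfun X)) (jop_d X)) /\
  (forall F : Functor (Adel X) (opR (Adel (opA X))),
      is_functor F -> is_exact F ->
      nat_iso (fcomp F (jfun X)) (jop_d X) ->
      nat_iso F (dIII X)).
Proof.
  split.
  - split; [apply D_functor|split; [apply D_exact|apply D_j]].
  - intros F HF HE [eta [th [Hi Hn]]].
    assert (Hn' : forall x y (f : @Hom X x y),
      heq (comp (eta y) (Fmor F (Fmor (jfun X) f)))
          (comp (Fmor (dIII X) (Fmor (jfun X) f)) (eta x))).
    { intros x y f. rewrite (Hn x y f). apply c_resp; [reflexivity|].
      apply Aheq_of_heq. reflexivity. }
    exists (etaP X F HF HE eta th Hi Hn'), (thP X F HF HE eta th Hi Hn'). split.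
    + intros P. destruct (etaP_spec X F HF HE eta th Hi Hn' P) as [E1 [E2 _]]. auto.
    + intros P Q al. apply etaP_nat.
Qed.
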